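(* Let $a>0$, $\beta>0$, let $\lambda$ be feasible, and let $C_1>25$. Then there exists $0<\delta_g(\beta,\lambda,C_1)\le\delta_\mu(\beta,\lambda)$ such that for every $0<\delta\le\delta_g$ and every real $k\ge k_0(\delta)$, \[ |g|^2\le C_1\delta^2 . \]
   Context: For $0<\delta<1$ and constants $\beta>0$, $\lambda\in\mathbb{R}$, put $\mu=\delta+\lambda\delta^{\beta}$. The constant $\lambda$ is called feasible if $\lambda>0$ when $0<\beta<1$, $\lambda\ge -1$ when $\beta=1$, and $\lambda\neq 0$ when $\beta>1$. For feasible $\lambda$, $\delta_\mu=\delta_\mu(\beta,\lambda)\in(0,1)$ denotes a number such that $\mu\ge 0$ for all $0<\delta\le\delta_\mu$. For $k\in\mathbb{R}$ define \[ g=g(k,\delta)=\mathrm{i}\delta\left[1-\frac{(\delta+2\mathrm{i})(2\mathrm{i}-\lambda\delta^{\beta})}{\delta(2\delta+\lambda\delta^{\beta})}\mathrm{e}^{-2|k|a}\right], \qquad k_0(\delta)=\frac{1}{2a}\ln\!\left(\frac{1}{2\delta^2+\lambda\delta^{\beta+1}}\right). \] *)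

(* Defs.v *)
From Stdlib Require Import Reals.
From Coquelicot Require Import Coquelicot.
Open Scope R_scope.

Definition rpow (x y : R) : R := Rpower x y.

Definition feasible (beta lam : R) : Prop :=
  (0 < beta < 1 -> 0 < lam) /\ (beta = 1 -> -1 <= lam) /\ (1 < beta -> lam <> 0).

Definition mu (beta lam delta : R) : R := delta + lam * rpow delta beta.

(* g(k, delta) = i delta [1 - (delta+2i)(2i - lam delta^beta)/(delta(2delta+lam delta^beta)) e^{-2|k|a}] *)
Definition g (a beta lam k delta : R) : C :=
  Cmult (0, delta)
    (Cminus 1
       (Cmult
          (Cdiv (Cmult (delta, 2) (- lam * rpow delta beta, 2))
                (RtoC (delta * (2 * delta + lam * rpow delta beta))))
          (RtoC (exp (- 2 * Rabs k * a))))).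

Definition k0 (a beta lam delta : R) : R :=
  / (2 * a) * ln (/ (2 * delta ^ 2 + lam * rpow delta (beta + 1))).

(* Main.v *)
Require Import Defs.
From Stdlib Require Import Reals.
From Coquelicot Require Import Coquelicot.
From Stdlib Require Import Lra Psatz.
Open Scope R_scope.

Lemma gform a beta lam k d : d <> 0 -> d * (2 * d + lam * rpow d beta) <> 0 ->
  Cmod (g a beta lam k d) ^ 2 = d^2 * ((1 + (d*(lam * rpow d beta)+4)*(exp (- 2 * Rabs k * a) / (d * (2 * d + lam * rpow d beta))))^2
     + ((2*d-2*(lam * rpow d beta))*(exp (- 2 * Rabs k * a) / (d * (2 * d + lam * rpow d beta))))^2).
Proof.
intros Hd HD. unfold Cmod. rewrite pow2_sqrt.
2:{ apply Rplus_le_le_0_compat; apply pow2_ge_0. }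
unfold g, Cdiv, Cminus, Cmult, Cinv, RtoC, Cplus, Copp. simpl.
field. split; auto. intro H; apply HD; rewrite H; ring.
Qed.

Lemma bound d L s eta C1 : Rabs d <= eta -> Rabs L <= eta -> eta <= 1 -> 0 <= eta ->
  eta <= (C1 - 25)/11 -> 0 < s <= 1 ->
  (1 + (d*L+4)*s)^2 + ((2*d-2*L)*s)^2 <= C1.
Proof.
intros Hd HL He1 He0 HeC Hs.
assert (HdL : Rabs (d*L) <= eta*eta).
{ rewrite Rabs_mult. apply Rmult_le_compat; auto using Rabs_pos. }
assert (-(eta*eta) <= d*L <= eta*eta) by (revert HdL; unfold Rabs; destruct (Rcase_abs (d*L)); lra).
assert (Hd2 : d*d <= eta*eta).
{ replace (d*d) with (Rabs d * Rabs d).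
  apply Rmult_le_compat; auto using Rabs_pos. rewrite <- Rabs_mult. apply Rabs_pos_eq. nra. }
assert (HL2 : L*L <= eta*eta).
{ replace (L*L) with (Rabs L * Rabs L).
  apply Rmult_le_compat; auto using Rabs_pos. rewrite <- Rabs_mult. apply Rabs_pos_eq. nra. }
set (A := d*L+4). set (B := 2*d-2*L).
assert (Hee : eta*eta <= 1) by nra.
assert (HA : 3 <= A <= 4 + eta*eta) by (unfold A; lra).
assert (H1 : (1 + A*s)^2 <= (1+A)^2).
{ assert (0 <= A*(1-s)) by (apply Rmult_le_pos; lra).
  assert (0 <= A*s) by (apply Rmult_le_pos; lra).
  assert (0 <= (A*(1-s))*(2+A+A*s)) by (apply Rmult_le_pos; lra).
  replace ((1+A)^2 - (1+A*s)^2) with ((A*(1-s))*(2+A+A*s)) in * by ring. lra. }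
assert (H2 : (B*s)^2 <= B^2).
{ assert (0 <= (B*B)*((1-s)*(1+s))) by (apply Rmult_le_pos; [nra| apply Rmult_le_pos; lra]).
  assert (B^2 - (B*s)^2 = (B*B)*((1-s)*(1+s))) by ring. lra. }
assert (H3 : A^2 + B^2 = (d*d+4)*(L*L+4)) by (unfold A, B; ring).
assert (H4 : (d*d+4)*(L*L+4) <= 16 + 9*(eta*eta)).
{ assert (d*d*(L*L) <= eta*eta*(eta*eta)) by (apply Rmult_le_compat; nra). nra. }
nra.
Qed.

Theorem lemma4p1 (beta lam C1 delta_mu : R) :
  0 < beta -> feasible beta lam -> 25 < C1 ->
  0 < delta_mu < 1 ->
  (forall delta, 0 < delta <= delta_mu -> 0 <= mu beta lam delta) ->
  exists delta_g, 0 < delta_g <= delta_mu /\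
    forall a, 0 < a ->
    forall delta k, 0 < delta <= delta_g -> k0 a beta lam delta <= k ->
      (Cmod (g a beta lam k delta)) ^ 2 <= C1 * delta ^ 2.
Proof.
intros Hb _ HC Hdm Hmu.
set (eta := Rmin 1 ((C1-25)/11)).
assert (He : 0 < eta) by (unfold eta; apply Rmin_glb_lt; lra).
assert (He1 : eta <= 1) by apply Rmin_l.
assert (HeC : eta <= (C1-25)/11) by apply Rmin_r.
assert (Hq : 0 < eta / (Rabs lam + 1)).
{ apply Rdiv_lt_0_compat; auto. pose proof (Rabs_pos lam); lra. }
set (t := Rpower (eta / (Rabs lam + 1)) (/ beta)).
assert (Ht : 0 < t) by (unfold t, Rpower; apply exp_pos).
assert (Htb : Rpower t beta = eta / (Rabs lam + 1)).
{ unfold t. rewrite Rpower_mult. rewrite Rinv_l by lra. apply Rpower_1; auto. }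
exists (Rmin delta_mu (Rmin eta t)). split.
{ split. apply Rmin_glb_lt; [lra|apply Rmin_glb_lt; lra]. apply Rmin_l. }
intros a Ha d k [Hd0 Hd] Hk.
assert (Hdm' : d <= delta_mu) by (eapply Rle_trans; [apply Hd| apply Rmin_l]).
assert (Hde : d <= eta) by (eapply Rle_trans; [apply Hd| eapply Rle_trans; [apply Rmin_r| apply Rmin_l]]).
assert (Hdt : d <= t) by (eapply Rle_trans; [apply Hd| eapply Rle_trans; [apply Rmin_r| apply Rmin_r]]).
assert (Hr0 : 0 < rpow d beta) by (unfold rpow, Rpower; apply exp_pos).
assert (Hr : rpow d beta <= eta / (Rabs lam + 1)).
{ rewrite <- Htb. apply Rle_Rpower_l; lra. }
set (L := lam * rpow d beta) in *.
assert (HL : Rabs L <= eta).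
{ unfold L. rewrite Rabs_mult, (Rabs_pos_eq (rpow d beta)) by lra.
  pose proof (Rabs_pos lam).
  apply Rle_trans with (Rabs lam * (eta / (Rabs lam + 1))).
  apply Rmult_le_compat_l; lra.
  unfold Rdiv. replace (Rabs lam * (eta * / (Rabs lam + 1))) with (eta * (Rabs lam / (Rabs lam + 1))) by (field; lra).
  rewrite <- (Rmult_1_r eta) at 2. apply Rmult_le_compat_l; [lra|].
  apply Rmult_le_reg_r with (Rabs lam + 1); [lra|]. rewrite Rmult_1_l. unfold Rdiv.
  rewrite Rmult_assoc, Rinv_l by lra. lra. }
assert (HmuD := Hmu d (conj Hd0 Hdm')). unfold mu in HmuD. fold L in HmuD.
set (D := d * (2*d+L)).
assert (HD : 0 < D) by (unfold D; nra).
assert (HDk : 2 * d ^ 2 + lam * rpow d (beta + 1) = D).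
{ unfold D, L, rpow. rewrite Rpower_plus, Rpower_1 by lra. ring. }
unfold k0 in Hk. rewrite HDk, ln_Rinv in Hk by lra.
assert (HE : exp (- 2 * Rabs k * a) <= D).
{ apply Rle_trans with (exp (ln D)); [|rewrite exp_ln; lra].
  enough (- 2 * Rabs k * a <= ln D) as Hx.
  { destruct (Rle_lt_or_eq_dec _ _ Hx) as [Hl|Hl]; [left; apply exp_increasing; auto| rewrite Hl; lra]. }
  pose proof (Rle_abs k).
  assert (- ln D <= 2*a*k).
  { apply Rmult_le_compat_l with (r := 2*a) in Hk; [|lra].
    rewrite <- Rmult_assoc, Rinv_r, Rmult_1_l in Hk by lra. lra. }
  nra. }
rewrite gform by (fold L; fold D; lra). fold L. fold D.
rewrite Rmult_comm. apply Rmult_le_compat_r; [apply pow2_ge_0|].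
apply bound with eta; auto; try lra.
rewrite Rabs_pos_eq; lra.
split. apply Rdiv_lt_0_compat; [apply exp_pos|lra].
apply Rmult_le_reg_r with D; auto. unfold Rdiv. rewrite Rmult_assoc, Rinv_l by lra. lra.
Qed.
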